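(* For every fixed nonnegative integer $k$, \[ \lim_{n\to\infty}\frac{\gamma_{2t}(K_n\Box K_{n+k})}{n}=\frac32. \]
   Context: For a graph $G=(V,E)$, a set $S\subseteq V$ is a total $2$-dominating set if every vertex of $V$ (including those in $S$) is adjacent to at least $2$ vertices of $S$; $\gamma_{2t}(G)$ is the minimum cardinality of such a set. $G\Box H$ denotes the Cartesian product: vertex set $V(G)\times V(H)$, with $(u_1,v_1)\sim(u_2,v_2)$ iff either $u_1=u_2$ and $v_1\sim v_2$, or $v_1=v_2$ and $u_1\sim u_2$. $K_n$ is the complete graph on $n$ vertices. *)

(* Defs.v *)
From HB Require Import structures.
From mathcomp Require Import all_boot all_order all_algebra.
Set Implicit Arguments. Unset Strict Implicit. Unset Printing Implicit Defensive.
Import Order.TTheory GRing.Theory Num.Theory.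

Definition complete_rel (n : nat) : rel 'I_n := fun i j => i != j.

Definition cart_rel (T1 T2 : finType) (e1 : rel T1) (e2 : rel T2) : rel (T1 * T2) :=
  fun x y => ((x.1 == y.1) && e2 x.2 y.2) || ((x.2 == y.2) && e1 x.1 y.1).

Definition total2dom (T : finType) (e : rel T) (S : {set T}) : bool :=
  [forall v : T, 2 <= #|[set u in S | e v u]|].

(* gamma_{2t}: minimum cardinality of a total 2-dominating set
   (defaults to #|T|.+1 when no such set exists). *)
Definition gamma2t (T : finType) (e : rel T) : nat :=
  \big[minn/#|T|.+1]_(S : {set T} | total2dom e S) #|S|.

Definition gamma2t_KK (n m : nat) : nat :=
  gamma2t (cart_rel (@complete_rel n) (@complete_rel m)).

(* Main.v *)
Require Import Defs.
From HB Require Import structures.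
From mathcomp Require Import all_boot all_order all_algebra.
From mathcomp Require Import zify ring lra.
Set Implicit Arguments. Unset Strict Implicit. Unset Printing Implicit Defensive.

Section Low.
Variables n m : nat.
Local Notation T := ('I_n * 'I_m)%type.
Local Notation adj := (cart_rel (@complete_rel n) (@complete_rel m)).
Variable S : {set T}.
Hypothesis HS : total2dom adj S.

Definition rc (i : 'I_n) := #|[set s in S | s.1 == i]|.
Definition cc (j : 'I_m) := #|[set s in S | s.2 == j]|.

Lemma adjE (v u : T) : adj v u = (u != v) && ((u.1 == v.1) || (u.2 == v.2)).
Proof.
move: v u => [i j] [i2 j2]; rewrite /cart_rel /complete_rel /=.
rewrite xpair_eqE (eq_sym i2) (eq_sym j2).
by case: (i == i2); case: (j == j2).
Qed.

Lemma HSv v : 2 <= #|[set u in S | adj v u]|.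
Proof. by move/forallP: HS. Qed.

Lemma nb_sub v : [set u in S | adj v u] \subset
  ([set s in S | s.1 == v.1] :\ v) :|: ([set s in S | s.2 == v.2] :\ v).
Proof.
apply/subsetP => u; rewrite !inE adjE => /andP[uS /andP[uv /orP[]->]];
  by rewrite uv uS ?orbT.
Qed.

Lemma card_aux (A B : {set T}) v : v \in A -> v \in B ->
  2 <= #|(A :\ v) :|: (B :\ v)| -> 4 <= #|A| + #|B|.
Proof.
move=> vA vB h; have [le _] := leq_card_setU (A :\ v) (B :\ v); move: le.
rewrite (cardsD1 v A) (cardsD1 v B) vA vB.
move: h; rewrite /=; lia.
Qed.

Lemma rc_cc v : v \in S -> 4 <= rc v.1 + cc v.2.
Proof.
move=> vS; apply: (card_aux (v:=v)); rewrite ?inE ?vS ?eqxx //.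
exact: leq_trans (HSv v) (subset_leq_card (nb_sub v)).
Qed.

Lemma row_empty i : rc i = 0 -> forall j, 2 <= cc j.
Proof.
move=> r0 j; have := leq_trans (HSv (i, j)) (subset_leq_card (nb_sub (i,j))).
have -> : [set s in S | s.1 == (i, j).1] = set0.
  by apply/eqP; rewrite -cards_eq0 -/(rc i) r0.
rewrite set0D set0U => h; apply: leq_trans h _.
by rewrite subset_leq_card // subD1set.
Qed.

Lemma col_empty j : cc j = 0 -> forall i, 2 <= rc i.
Proof.
move=> c0 i; have := leq_trans (HSv (i, j)) (subset_leq_card (nb_sub (i,j))).
have -> : [set s in S | s.2 == (i, j).2] = set0.
  by apply/eqP; rewrite -cards_eq0 -/(cc j) c0.
rewrite set0D setU0 => h; apply: leq_trans h _.
by rewrite subset_leq_card // subD1set.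
Qed.

Lemma card_rows : #|S| = \sum_(i : 'I_n) rc i.
Proof.
rewrite -sum1_card (partition_big (fun s : T => s.1) xpredT) //=.
apply: eq_bigr => i _; rewrite /rc -sum1_card; apply: eq_bigl => s.
by rewrite inE.
Qed.

Lemma card_cols : #|S| = \sum_(j : 'I_m) cc j.
Proof.
rewrite -sum1_card (partition_big (fun s : T => s.2) xpredT) //=.
apply: eq_bigr => i _; rewrite /cc -sum1_card; apply: eq_bigl => s.
by rewrite inE.
Qed.

Definition w (r : nat) := if r == 1 then 6 else if r == 2 then 3 else 2.

Lemma sum_w_rows : (forall i, 0 < rc i) -> 6 * n <= \sum_(s in S) w (rc s.1).
Proof.
move=> hr.
rewrite (partition_big (fun s : T => s.1) xpredT) //=.
rewrite -[n in 6 * n]card_ord mulnC -sum_nat_const.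
apply: leq_sum => i _.
rewrite (eq_bigr (fun _ => w (rc i))); last by move=> s /andP[_ /eqP->].
rewrite sum_nat_const.
have -> : #|[pred s : T | (s \in S) && (s.1 == i)]| = rc i.
  by rewrite /rc; apply: eq_card => s; rewrite !inE.
have := hr i; rewrite /w; case: (rc i) => [|[|[|r]]] //= _; lia.
Qed.

Lemma sum_w_cols : (forall j, 0 < cc j) -> 6 * m <= \sum_(s in S) w (cc s.2).
Proof.
move=> hr.
rewrite (partition_big (fun s : T => s.2) xpredT) //=.
rewrite -[m in 6 * m]card_ord mulnC -sum_nat_const.
apply: leq_sum => i _.
rewrite (eq_bigr (fun _ => w (cc i))); last by move=> s /andP[_ /eqP->].
rewrite sum_nat_const.
have -> : #|[pred s : T | (s \in S) && (s.2 == i)]| = cc i.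
  by rewrite /cc; apply: eq_card => s; rewrite !inE.
have := hr i; rewrite /w; case: (cc i) => [|[|[|r]]] //= _; lia.
Qed.

Lemma w_pair v : v \in S -> w (rc v.1) + w (cc v.2) <= 8.
Proof.
move=> vS; have := rc_cc vS.
have r1 : 0 < rc v.1 by apply/card_gt0P; exists v; rewrite inE vS eqxx.
have c1 : 0 < cc v.2 by apply/card_gt0P; exists v; rewrite inE vS eqxx.
move: r1 c1; rewrite /w.
case: (rc v.1) => [|[|[|r]]]; case: (cc v.2) => [|[|[|c]]] //=; lia.
Qed.

Lemma arith_fin (a n0 m0 : nat) : 6 * n0 + 6 * m0 <= a * 8 -> n0 <= m0 -> 3 * n0 <= 2 * a.
Proof. lia. Qed.

Lemma lower : n <= m -> 3 * n <= 2 * #|S|.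
Proof.
move=> nm.
case: (boolP [exists i, rc i == 0]) => [/existsP[i /eqP ri]|].
  have := row_empty ri; rewrite card_cols => h.
  have : 2 * m <= \sum_(j : 'I_m) cc j.
    by rewrite -[m in 2 * m]card_ord mulnC -sum_nat_const; apply: leq_sum.
  lia.
rewrite negb_exists => /forallP hr'.
have hr : forall i, 0 < rc i by move=> i; rewrite lt0n; apply: hr'.
case: (boolP [exists j, cc j == 0]) => [/existsP[j /eqP cj]|].
  have := col_empty cj; rewrite card_rows => h.
  have : 2 * n <= \sum_(i : 'I_n) rc i.
    by rewrite -[n in 2 * n]card_ord mulnC -sum_nat_const; apply: leq_sum.
  lia.
rewrite negb_exists => /forallP hc'.
have hc : forall j, 0 < cc j by move=> j; rewrite lt0n; apply: hc'.
have h1 := sum_w_rows (fun i => hr i).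
have h2 := sum_w_cols (fun j => hc j).
have h3 : \sum_(s in S) (w (rc s.1) + w (cc s.2)) <= \sum_(s in S) 8.
  by apply: leq_sum => s sS; apply: w_pair.
rewrite big_split /= sum_nat_const in h3.
have h := leq_trans (leq_add h1 h2) h3.
by apply: arith_fin h nm.
Qed.
End Low.
Section Up.
Variables N M B : nat.
Hypothesis B4 : 4 <= B.
Hypothesis Bmod : B %% 4 = 0.
Hypothesis BN : B <= N.+1.
Hypothesis NM : N <= M.

Definition bl (x : nat) := if x < B then x %/ 4 else 0.
Definition ro (x : nat) := if x < B then x %% 4 else 1.

Lemma bl_lt x : 4 * bl x + 3 < B.
Proof. rewrite /bl; case: ifP => h; lia. Qed.

Lemma ro0 x : ro x = 0 -> x < B /\ x %% 4 = 0.
Proof. rewrite /ro; case: ifP => h; lia. Qed.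

Lemma ro_of x : x < B -> ro x = x %% 4 /\ bl x = x %/ 4.
Proof. by rewrite /ro /bl => ->. Qed.

Lemma step x : x < B -> x %% 4 = 0 -> 4 * ((x + 1) %/ 4) = x /\ (x+1) %% 4 = 1 /\ x + 1 < B.
Proof. lia. Qed.


Local Notation T := ('I_N.+1 * 'I_M.+1)%type.
Local Notation adj := (cart_rel (@complete_rel N.+1) (@complete_rel M.+1)).

Definition S0 : {set T} :=
  [set x : T | ((ro x.1 != 0) && (val x.2 == 4 * bl x.1))
            || ((ro x.2 != 0) && (val x.1 == 4 * bl x.2))].

Lemma adjE' (v u : T) : adj v u = (u != v) && ((u.1 == v.1) || (u.2 == v.2)).
Proof.
move: v u => [i j] [i2 j2]; rewrite /cart_rel /complete_rel /=.
rewrite xpair_eqE (eq_sym i2) (eq_sym j2).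
by case: (i == i2); case: (j == j2).
Qed.

Lemma two_nb (v u1 u2 : T) : u1 \in S0 -> u2 \in S0 -> u1 != u2 ->
  adj v u1 -> adj v u2 -> 2 <= #|[set u in S0 | adj v u]|.
Proof.
move=> h1 h2 ne a1 a2.
have <- : #|[set u1; u2]| = 2 by rewrite cards2 ne.
apply: subset_leq_card; apply/subsetP => u /set2P [] ->;
  by rewrite in_set ?h1 ?a1 ?h2 ?a2.
Qed.

Lemma row_has (i : 'I_N.+1) : exists j : 'I_M.+1, (i, j) \in S0.
Proof.
case: (eqVneq (ro i) 0) => h.
  have [iB im] := ro0 h.
  have [e1 [e2 e3]] := step iB im.
  have ltM : i + 1 < M.+1 by lia.
  exists (inord (i + 1)); rewrite inE /= inordK //.
  have [-> ->] := ro_of e3.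
  by rewrite e2 e1 eqxx orbT.
have ltM : 4 * bl i < M.+1 by have := bl_lt i; lia.
by exists (inord (4 * bl i)); rewrite inE /= inordK // h eqxx.
Qed.

Lemma col_has (j : 'I_M.+1) : exists i : 'I_N.+1, (i, j) \in S0.
Proof.
case: (eqVneq (ro j) 0) => h.
  have [jB jm] := ro0 h.
  have [e1 [e2 e3]] := step jB jm.
  have ltN : j + 1 < N.+1 by lia.
  exists (inord (j + 1)); rewrite inE /= inordK //.
  have [-> ->] := ro_of e3.
  by rewrite e2 e1 eqxx.
have ltN : 4 * bl j < N.+1 by have := bl_lt j; lia.
by exists (inord (4 * bl j)); rewrite inE /= inordK // h eqxx orbT.
Qed.


Lemma pick3 (a x : nat) : exists r1 r2 : nat,
  [/\ r1 != r2, r1 != x, r2 != x, a < r1 <= a + 3 & a < r2 <= a + 3].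
Proof.
case: (eqVneq x (a+1)) => [->|h1].
  by exists (a+2), (a+3); split; lia.
case: (eqVneq x (a+3)) => [->|h3].
  by exists (a+1), (a+2); split; lia.
by exists (a+1), (a+3); split; lia.
Qed.

Lemma vert_in (b r : nat) (jv : 'I_M.+1) : 4 * b + 3 < B -> 4 * b < r <= 4 * b + 3 ->
  val jv = 4 * b -> ((inord r : 'I_N.+1), jv) \in S0.
Proof.
move=> hb hr hj; have rN : r < N.+1 by lia.
rewrite inE /= inordK // hj.
have rB : r < B by lia.
have [-> ->] := ro_of rB.
apply/orP; left; lia.
Qed.

Lemma horz_in (b r : nat) (iv : 'I_N.+1) : 4 * b + 3 < B -> 4 * b < r <= 4 * b + 3 ->
  val iv = 4 * b -> (iv, (inord r : 'I_M.+1)) \in S0.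
Proof.
move=> hb hr hj; have rM : r < M.+1 by lia.
rewrite inE /= inordK // hj.
have rB : r < B by lia.
have [-> ->] := ro_of rB.
apply/orP; right; lia.
Qed.

Lemma S0_dom : total2dom adj S0.
Proof.
apply/forallP => -[i j].
case: (boolP ((i, j) \in S0)) => vS; last first.
  have [j1 h1] := row_has i; have [i2 h2] := col_has j.
  apply: (two_nb (v:=(i,j)) h1 h2).
  - by apply/negP => /eqP [_ e2]; rewrite e2 (negbTE vS) in h1.
  - rewrite adjE' eqxx /= andbT; apply/negP => /eqP e; move: vS; by rewrite -e h1.
  - rewrite adjE' eqxx /= orbT andbT; apply/negP => /eqP e; move: vS; by rewrite -e h2.
move: (vS); rewrite inE /= => /orP[] /andP[hro /eqP hv].
  have [r1 [r2 [ne n1 n2 hr1 hr2]]] := pick3 (4 * bl i) i.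
  have hb := bl_lt i.
  have r1N : r1 < N.+1 by lia.
  have r2N : r2 < N.+1 by lia.
  apply: (two_nb (vert_in hb hr1 hv) (vert_in hb hr2 hv)).
  - by apply/negP => /eqP [] /(congr1 val); rewrite /= !inordK //; apply/eqP.
  - rewrite adjE' eqxx ?orbT ?orTb ?andbT; apply/negP => /eqP [] /(congr1 val).
    by rewrite /= inordK //; apply/eqP.
  - rewrite adjE' eqxx ?orbT ?orTb ?andbT; apply/negP => /eqP [] /(congr1 val).
    by rewrite /= inordK //; apply/eqP.
have [r1 [r2 [ne n1 n2 hr1 hr2]]] := pick3 (4 * bl j) j.
have hb := bl_lt j.
have r1M : r1 < M.+1 by lia.
have r2M : r2 < M.+1 by lia.
apply: (two_nb (horz_in hb hr1 hv) (horz_in hb hr2 hv)).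
- by apply/negP => /eqP [] /(congr1 val); rewrite /= !inordK //; apply/eqP.
- rewrite adjE' eqxx ?orbT ?orTb ?andbT; apply/negP => /eqP [] /(congr1 val).
  by rewrite /= inordK //; apply/eqP.
- rewrite adjE' eqxx ?orbT ?orTb ?andbT; apply/negP => /eqP [] /(congr1 val).
  by rewrite /= inordK //; apply/eqP.
Qed.


Lemma card_ro (K : nat) : B <= K.+1 ->
  #|[set x : 'I_K.+1 | ro x != 0]| <= K.+1 - B %/ 4.
Proof.
move=> hK.
have hc := cardsC [set x : 'I_K.+1 | ro x == 0].
have -> : [set x : 'I_K.+1 | ro x != 0] = ~: [set x : 'I_K.+1 | ro x == 0].
  by apply/setP => x; rewrite !inE.
have f_ok (b : 'I_(B %/ 4)) : 4 * b < K.+1 by have := ltn_ord b; lia.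
have inj : injective (fun b : 'I_(B %/ 4) => (inord (4 * b) : 'I_K.+1)).
  move=> b1 b2 /(congr1 val); rewrite /= !inordK // => e; apply: val_inj => /=; lia.
have sub : [set (inord (4 * b) : 'I_K.+1) | b : 'I_(B %/ 4)] \subset [set x : 'I_K.+1 | ro x == 0].
  apply/subsetP => x /imsetP [b _ ->]; rewrite inE inordK //.
  have hb : 4 * b < B by have := ltn_ord b; lia.
  by have [-> _] := ro_of hb; apply/eqP; lia.
have := subset_leq_card sub; rewrite card_imset // card_ord.
move: hc; rewrite card_ord; lia.
Qed.

Lemma card_S0 : #|S0| <= (N.+1 - B %/ 4) + (M.+1 - B %/ 4).
Proof.
pose f (i : 'I_N.+1) : T := (i, inord (4 * bl i)).
pose g (j : 'I_M.+1) : T := (inord (4 * bl j), j).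
have sub : S0 \subset f @: [set x : 'I_N.+1 | ro x != 0] :|: g @: [set x : 'I_M.+1 | ro x != 0].
  apply/subsetP => -[i j]; rewrite inE /= => /orP[] /andP[hro /eqP hv].
    apply/setUP; left; apply/imsetP; exists i; first by rewrite inE.
    rewrite /f; congr pair; apply: val_inj; rewrite /= inordK // -hv //.
  apply/setUP; right; apply/imsetP; exists j; first by rewrite inE.
  rewrite /g; congr pair; apply: val_inj; rewrite /= inordK // -hv //.
have BM : B <= M.+1 by lia.
apply: leq_trans (leq_trans (subset_leq_card sub) (leq_card_setU _ _).1) _.
apply: leq_add; apply: leq_trans (leq_imset_card _ _) _; [exact: card_ro BN | exact: card_ro BM].
Qed.

End Up.

Lemma gamma_lower n m : n <= m -> 3 * n <= 2 * gamma2t_KK n m.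
Proof.
move=> nm; rewrite /gamma2t_KK /gamma2t.
apply: (big_ind (fun x => 3 * n <= 2 * x)).
- rewrite card_prod !card_ord; nia.
- move=> x y hx hy; lia.
- by move=> S HS; apply: lower.
Qed.

Lemma bigmin_le_seq (I : eqType) (r : seq I) (P : pred I) (F : I -> nat) x j :
  j \in r -> P j -> \big[minn/x]_(i <- r | P i) F i <= F j.
Proof.
elim: r => [|a r IH] //=; rewrite in_cons big_cons => /orP[/eqP <-|jr] Pj.
  by rewrite Pj geq_minl.
case: (P a); last exact: IH.
by apply: leq_trans (geq_minr _ _) (IH jr Pj).
Qed.

Lemma gamma_le_S0 N M B : 4 <= B -> B %% 4 = 0 -> B <= N.+1 -> N <= M ->
  gamma2t_KK N.+1 M.+1 <= #|S0 N M B|.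
Proof.
move=> B4 Bmod BN NM.
rewrite /gamma2t_KK /gamma2t; apply: bigmin_le_seq; first exact: mem_index_enum.
exact: S0_dom.
Qed.

Lemma gamma_upper p k : 2 * gamma2t_KK p.+4 (p.+4 + k) <= 3 * p.+4 + 2 * k + 3.
Proof.
set B := 4 * (p.+4 %/ 4).
have B4 : 4 <= B by rewrite /B; lia.
have Bmod : B %% 4 = 0 by rewrite /B; lia.
have BN : B <= p.+3.+1 by rewrite /B; lia.
have NM : p.+3 <= p.+3 + k by lia.
have hc := card_S0 B4 Bmod BN NM.
have : gamma2t_KK p.+4 (p.+4 + k) <= #|S0 p.+3 (p.+3 + k) B| :=
  gamma_le_S0 B4 Bmod BN NM.
move: hc; rewrite /B; lia.
Qed.

Unset Implicit Arguments.
Import Order.TTheory GRing.Theory Num.Theory.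
Lemma bounds (k n : nat) : 4 <= n -> 3 * n <= 2 * gamma2t_KK n (n + k) <= 3 * n + 2 * k + 3.
Proof.
case: n => [|[|[|[|p]]]] // _.
by rewrite gamma_lower ?leq_addr // gamma_upper.
Qed.

Local Open Scope ring_scope.

Theorem theorem17 (k : nat) (eps : rat) (heps : 0 < eps) :
  exists N : nat, forall n : nat, (N <= n)%N ->
    `| (gamma2t_KK n (n + k))%:R / n%:R - 3 / 2 | < eps.
Proof.
set c : rat := (2 * k + 3)%:R.
have c0 : 0 <= c / eps by rewrite divr_ge0 // ltW.
exists (Num.bound (c / eps)).+4 => n hn.
have hb := archi_boundP c0.
have n4 : (4 <= n)%N by lia.
have /andP[l u] := bounds k n n4.
set g := gamma2t_KK n (n + k) in l u *.
have [d hd] : exists d, (2 * g = 3 * n + d)%N by exists (2 * g - 3 * n)%N; lia.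
have dc : (d <= 2 * k + 3)%N by lia.
have dcR : d%:R <= c by rewrite /c ler_nat.
have hdR : 2 * g%:R = 3 * n%:R + d%:R :> rat.
  by have := congr1 (fun x => x%:R : rat) hd; rewrite /= natrD !natrM.
have nR : (Num.bound (c / eps))%:R < n%:R :> rat by rewrite ltr_nat; lia.
have n0 : 0 < n%:R :> rat by rewrite ltr0n; lia.
have e1 : g%:R / n%:R - 3 / 2 = d%:R / (2 * n%:R) :> rat.
  have -> : (g%:R : rat) = (3 * n%:R + d%:R) / 2.
    by rewrite -hdR mulrC mulKf.
  by field; rewrite lt0r_neq0.
rewrite e1 ger0_norm; last by rewrite divr_ge0 // mulr_ge0.
rewrite ltr_pdivrMr; last by rewrite mulr_gt0.
have ce : c < n%:R * eps.
  by rewrite -ltr_pdivrMr //; apply: lt_trans hb nR.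
nra.
Qed.
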